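(* Let $G$ be a graph of girth at least $5$ (every cycle of $G$, if any, has length at least $5$), and let $H$ be a maximal co-interval subgraph of $G$ with at least one edge. Then there is an edge $uv\in E(G)$ such that $E(H)=\delta_G(u)\cup\delta_G(v)$, i.e. $H$ is the $(u,v)$-ant of $G$.
   Context: All graphs are finite and simple. $\delta_G(x)$ is the set of edges of $G$ incident to $x$ and $N_G[x]$ the closed neighbourhood. For an edge $uv$, the $(u,v)$-ant of $G$ is the subgraph $(N_G[u]\cup N_G[v],\ \delta_G(u)\cup\delta_G(v))$. A graph is co-interval if its vertices can be assigned closed real intervals such that two distinct vertices are adjacent iff their intervals are disjoint. A co-interval subgraph $H$ of $G$ is maximal if no co-interval subgraph $H'$ of $G$ satisfies $E(H)\subsetneq E(H')$. *)

(* Defs.v *)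
From mathcomp Require Import all_boot.
From Stdlib Require Import Reals.
Set Implicit Arguments. Unset Strict Implicit. Unset Printing Implicit Defensive.

(* A finite simple graph is a symmetric irreflexive relation g on a finType T.
   Edges are represented as 2-element vertex sets {x, y}. *)

Definition edges (T : finType) (g : rel T) : {set {set T}} :=
  [set e : {set T} | [exists x : T, exists y : T, g x y && (e == [set x; y])]].

Definition delta (T : finType) (g : rel T) (x : T) : {set {set T}} :=
  [set e in edges g | x \in e].

Definition girth_ge5 (T : finType) (g : rel T) : Prop :=
  forall s : seq T, uniq s -> 3 <= size s -> cycle g s -> 5 <= size s.

Definition is_subgraph (T : finType) (g : rel T) (V : {set T}) (E : {set {set T}}) : Prop :=
  E \subset edges g /\ (forall e, e \in E -> e \subset V).

(* closed real interval [l i, r i] (nonempty: l i <= r i); two distinct vertices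
   are adjacent iff their intervals are disjoint *)
Definition cointerval (T : finType) (V : {set T}) (E : {set {set T}}) : Prop :=
  exists (l r : T -> R),
    (forall x, x \in V -> Rle (l x) (r x)) /\
    (forall x y, x \in V -> y \in V -> x != y ->
       ([set x; y] \in E <-> (Rlt (r x) (l y) \/ Rlt (r y) (l x)))).

Definition cointerval_subgraph (T : finType) (g : rel T) (V : {set T}) (E : {set {set T}}) : Prop :=
  is_subgraph g V E /\ cointerval V E.

Definition maximal_cointerval_subgraph (T : finType) (g : rel T) (V : {set T}) (E : {set {set T}}) : Prop :=
  cointerval_subgraph g V E /\
  ~ (exists (V' : {set T}) (E' : {set {set T}}), cointerval_subgraph g V' E' /\ E \proper E').

(* Main.v *)
Require Import Defs.
From mathcomp Require Import all_boot.
From Stdlib Require Import Reals Lra.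
From mathcomp Require Import all_boot.

Set Implicit Arguments. Unset Strict Implicit.
Section Aux.
Variables (T : finType) (g : rel T) (gsym : symmetric g) (girr : irreflexive g).

Lemma mem_edges2 x y : x != y -> ([set x; y] \in edges g) = g x y.
Proof.
move=> xy; rewrite /edges inE; apply/idP/idP.
  case/existsP=> x' /existsP [y' /andP [gxy /eqP E]].
  have hx : x \in [set x'; y'] by rewrite -E set21.
  have hy : y \in [set x'; y'] by rewrite -E set22.
  move: hx hy; rewrite !inE => /orP [] /eqP Ex /orP [] /eqP Ey; subst x y.
  - by rewrite eqxx in xy.
  - by [].
  - by rewrite gsym.
  - by rewrite eqxx in xy.
move=> gxy; apply/existsP; exists x; apply/existsP; exists y; by rewrite gxy eqxx.
Qed.

Lemma edges_form e : e \in edges g -> exists x y, g x y /\ e = [set x; y].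
Proof.
by rewrite /edges inE => /existsP [x /existsP [y /andP [gxy /eqP E]]]; exists x, y.
Qed.

Lemma exists_min (f : T -> R) (s : seq T) : s != [::] ->
  exists x, x \in s /\ forall y, y \in s -> Rle (f x) (f y).
Proof.
elim: s => // a s IH _.
case: s IH => [|b s] IH.
  exists a; split; first by rewrite inE eqxx.
  by move=> y; rewrite inE => /eqP ->; apply Rle_refl.
case: IH => // m [ms mmin].
case: (Rle_lt_dec (f a) (f m)) => H.
  exists a; split; first by rewrite inE eqxx.
  move=> y; rewrite inE => /orP [/eqP ->|ys]; first by apply Rle_refl.
  by apply: Rle_trans H (mmin _ ys).
exists m; split; first by rewrite inE ms orbT.
move=> y; rewrite inE => /orP [/eqP ->|ys]; first by lra.
exact: mmin.
Qed.

Lemma mem_delta e x : (e \in delta g x) = (e \in edges g) && (x \in e).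
Proof. by rewrite /delta !inE. Qed.

End Aux.

Ltac simp gs := repeat match goal with
  | H : is_true (~~ ?c) |- context [?c] => rewrite (negbTE H)
  | H : is_true ?c |- context [?c] => rewrite H
  | H : is_true (~~ ?g ?a ?b) |- context [?g ?b ?a] => rewrite (gs b a) (negbTE H)
  | H : is_true (?g ?a ?b) |- context [?g ?b ?a] => rewrite (gs b a) H
  end.

Theorem mainTheorem13 (T : finType) (g : rel T)
  (gsym : symmetric g) (girr : irreflexive g) (hgirth : girth_ge5 g)
  (VH : {set T}) (EH : {set {set T}})
  (hmax : maximal_cointerval_subgraph g VH EH) (hne : EH != set0) :
  exists u v : T, g u v /\ EH = delta g u :|: delta g v.
Proof.
case: hmax => [[[sub Esub] [l [r [lr hiff]]]] nomax].
have edgeH : forall x y, x \in VH -> y \in VH -> x != y ->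
    (Rlt (r x) (l y) \/ Rlt (r y) (l x)) -> g x y.
  move=> x y hx hy xy H.
  have : [set x; y] \in EH by apply/(hiff x y hx hy xy).
  by move/(subsetP sub); rewrite (mem_edges2 gsym xy).
case/set0Pn: hne => e0 he0.
case: (edges_form (subsetP sub e0 he0)) => x0 [y0 [gxy0 ee0]].
have hx0 : x0 \in VH by apply: (subsetP (Esub e0 he0)); rewrite ee0 set21.
have hy0 : y0 \in VH by apply: (subsetP (Esub e0 he0)); rewrite ee0 set22.
have xy0 : x0 != y0 by apply: contraTneq gxy0 => ->; rewrite girr.
have nen : enum VH != [::].
  have : x0 \in enum VH by rewrite mem_enum.
  by case: (enum VH).
case: (exists_min r nen) => u [hu umin].
case: (exists_min (fun w => Ropp (l w)) nen) => v [hv vmax].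
rewrite mem_enum in hu; rewrite mem_enum in hv.
have {}umin : forall w, w \in VH -> Rle (r u) (r w).
  by move=> w hw; apply: umin; rewrite mem_enum.
have {}vmax : forall w, w \in VH -> Rle (l w) (l v).
  by move=> w hw; have := vmax w; rewrite mem_enum => /(_ hw); lra.
case: (Rlt_le_dec (r u) (l v)) => Huv; last first.
  exfalso.
  have : Rlt (r x0) (l y0) \/ Rlt (r y0) (l x0) by apply/(hiff x0 y0 hx0 hy0 xy0); rewrite -ee0.
  have := umin x0 hx0; have := umin y0 hy0; have := vmax x0 hx0; have := vmax y0 hy0.
  lra.
have lru := lr u hu; have lrv := lr v hv.
have uv : u != v by apply/eqP => E; rewrite E in Huv; lra.
have vu : v != u by rewrite eq_sym.
have guv : g u v by apply: edgeH => //; left.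
have gvu : g v u by rewrite gsym.
have key : forall x y, x \in VH -> y \in VH -> Rlt (r x) (l y) -> (x = u) \/ (y = v).
  move=> x y hx hy H.
  case: (eqVneq x u) => [->|xu]; first by left.
  case: (eqVneq y v) => [->|yv]; first by right.
  exfalso.
  have rux := umin x hx; have lyv := vmax y hy.
  have lrx := lr x hx; have lry := lr y hy.
  have uy : u != y by apply/eqP => E; rewrite E in rux; lra.
  have xv : x != v by apply/eqP => E; rewrite E in H; lra.
  have xy : x != y by apply/eqP=> E; rewrite E in H; lra.
  have g1 : g u y by apply: edgeH => //; left; lra.
  have g2 : g x v by apply: edgeH => //; left; lra.
  have g3 : g x y by apply: edgeH => //; left.
  have gyx : g y x by rewrite gsym.
  have : 5 <= size [:: u; y; x; v].
    apply: hgirth => //.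
      by rewrite /= !inE !negb_or uy (eq_sym u x) xu uv (eq_sym y x) xy yv xv.
    by rewrite /= g1 gyx g2 gvu.
  by [].
have EHsub : EH \subset delta g u :|: delta g v.
  apply/subsetP => e he.
  have eE := subsetP sub e he.
  case: (edges_form eE) => x [y [gxy ee]].
  have hx : x \in VH by apply: (subsetP (Esub e he)); rewrite ee set21.
  have hy : y \in VH by apply: (subsetP (Esub e he)); rewrite ee set22.
  have xy : x != y by apply: contraTneq gxy => ->; rewrite girr.
  have : Rlt (r x) (l y) \/ Rlt (r y) (l x) by apply/(hiff x y hx hy xy); rewrite -ee.
  rewrite in_setU !mem_delta eE /= ee !inE.
  case=> H; [case: (key x y hx hy H) | case: (key y x hy hx H)] => ->;
    by rewrite eqxx ?orbT.
have tri : forall w, g u w -> g v w -> False.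
  move=> w guw gvw.
  have uw : u != w by apply: contraTneq guw => ->; rewrite girr.
  have wv : w != v by apply: contraTneq gvw => ->; rewrite girr.
  have gwv : g w v by rewrite gsym.
  have : 5 <= size [:: u; w; v].
    apply: hgirth => //.
      by rewrite /= !inE !negb_or uw uv wv.
    by rewrite /= guw gwv gvu.
  by [].
pose V' := [set w | (w == u) || (w == v) || g u w || g v w].
pose E' := delta g u :|: delta g v.
have hE' : cointerval_subgraph g V' E'.
  split; first split.
  - apply/subsetP => e; rewrite /E' in_setU !mem_delta.
    by case/orP => /andP [].
  - move=> e; rewrite /E' in_setU !mem_delta => /orP [] /andP [eE ue];
      case: (edges_form eE) => x [y [gxy ee]]; move: ue; rewrite ee !inE => hxy;
      have gyx : g y x := etrans (gsym y x) gxy;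
      apply/subsetP => w; rewrite !inE => /orP [] /eqP ->;
      case/orP: hxy => /eqP E; subst;
      (try by rewrite eqxx ?orbT); (try by rewrite gxy !orbT);
      by rewrite gyx !orbT.
  pose l' := fun w => if w == u then (IZR 0%Z) else if w == v then (IZR 3%Z) else if g u w then (IZR 2%Z) else (IZR 0%Z).
  pose r' := fun w => if w == u then (IZR 1%Z) else if w == v then (IZR 4%Z) else if g u w then (IZR 4%Z) else (IZR 2%Z).
  exists l', r'; split.
    move=> w _; rewrite /l' /r'; repeat (case: ifP => _); lra.
  have cls : forall w, w \in V' -> [\/ w = u, w = v, [/\ w != u, w != v, g u w & ~~ g v w]
       | [/\ w != u, w != v, ~~ g u w & g v w]].
    move=> w; rewrite inE.
    case: (eqVneq w u) => [->|wu]; first by move=> _; apply: Or41.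
    case: (eqVneq w v) => [->|wv]; first by move=> _; apply: Or42.
    case guw: (g u w); case gvw: (g v w) => //= _.
    - by exfalso; apply: (tri w).
    - by apply: Or43.
    - by apply: Or44.
  move=> x y hx hy xy.
  rewrite /E' in_setU !mem_delta (mem_edges2 gsym xy) !inE /l' /r'.
  rewrite ![u == _]eq_sym ![v == _]eq_sym.
  case: (cls x hx) => [Ex|Ex|[? ? ? ?]|[? ? ? ?]];
  case: (cls y hy) => [Ey|Ey|[? ? ? ?]|[? ? ? ?]]; subst;
  try (by rewrite eqxx in xy);
  simp gsym; rewrite ?eqxx ?andbF ?andbT ?orbF ?orbT /=;
  simp gsym; rewrite ?eqxx ?andbF ?andbT ?orbF ?orbT /=;
  (split => H; [try discriminate; lra | try lra; try done]).
case: (boolP (EH == E')) => [/eqP ->| ne].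
  by exists u, v.
exfalso; apply: nomax; exists V', E'; split => //.
by rewrite properEneq ne EHsub.
Qed.
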